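(* Let $E$ be a directed graph and $G(E)$ its graph inverse semigroup. The following are equivalent: (1) the semigroup operation of $G(E)$ is jointly continuous with respect to the topology $\tau_c$; (2) for each non-zero $uv^{-1}\in G(E)$ the set $M_{uv^{-1}}=\{(ab^{-1},cd^{-1})\in G(E)\times G(E)\mid ab^{-1}\cdot cd^{-1}=uv^{-1}\}$ is finite; (3) for each vertex $e\in E^0$ the set $I_e=\{u\in\operatorname{Path}(E)\mid r(u)=e\}$ is finite; (4) $G(E)$ contains neither a subsemigroup isomorphic to the bicyclic monoid nor a subsemigroup isomorphic to the semigroup $\mathcal{M}_\omega$ of $\omega\times\omega$-matrix units; (5) each $\mathcal{D}$-class of $G(E)$ is finite.
   Context: A directed graph $E=(E^0,E^1,r,s)$ consists of disjoint sets $E^0$ (vertices), $E^1$ (edges) and maps $s,r:E^1\to E^0$. Paths: vertices (length zero) and finite sequences of edges $e_1\ldots e_n$ with $r(e_i)=s(e_{i+1})$; $\operatorname{Path}(E)$ is the set of all paths, with $s(e_1\ldots e_n)=s(e_1)$, $r(e_1\ldots e_n)=r(e_n)$, $s(v)=r(v)=v$ for vertices. The graph inverse semigroup $G(E)$ is the semigroup with zero $0$ generated by $E^0$, $E^1$, and $E^{-1}=\{e^{-1}\mid e\in E^1\}$ subject to: for $a,b\in E^0$, $e,f\in E^1$: $ab=a$ if $a=b$, else $0$; $s(e)e=er(e)=e$; $e^{-1}s(e)=r(e)e^{-1}=e^{-1}$; $e^{-1}f=r(e)$ if $e=f$, else $0$. Every non-zero element is uniquely $uv^{-1}$ with $u,v\in\operatorname{Path}(E)$,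 $r(u)=r(v)$, with product $u_1v_1^{-1}\cdot u_2v_2^{-1}=u_1wv_2^{-1}$ if $u_2=v_1w$, $=u_1(v_2w)^{-1}$ if $v_1=u_2w$ (for a path $w$), and $0$ otherwise. The topology $\tau_c$ on $G(E)$: every non-zero element is isolated, and the open neighborhoods of $0$ are exactly the cofinite subsets of $G(E)$ containing $0$. The bicyclic monoid is the monoid generated by $p,q$ subject to $pq=1$. For a set $X$, $\mathcal{M}_X=(X\times X)\cup\{0\}$ with $(a,b)(c,d)=(a,d)$ if $b=c$, $0$ otherwise, and $0$ a zero. $\mathcal{D}$ denotes Green's $\mathcal{D}$-relation. *)

(* Defs.v *)
From Stdlib Require Import List ClassicalEpsilon Arith.
Import ListNotations.

Definition finite_set {T : Type} (P : T -> Prop) : Prop :=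
  exists l : list T, forall x, P x -> In x l.

Section GraphInverseSemigroup.
Context {V Ed : Type} (s r : Ed -> V).

(* A path is represented as (start vertex, list of edges); vertices are
   the paths (v, []). *)
Definition path : Type := (V * list Ed)%type.

Fixpoint chain (v : V) (l : list Ed) : Prop :=
  match l with
  | [] => True
  | e :: l' => s e = v /\ chain (r e) l'
  end.

Definition is_path (p : path) : Prop := chain (fst p) (snd p).

Fixpoint last_v (v : V) (l : list Ed) : V :=
  match l with
  | [] => v
  | e :: l' => last_v (r e) l'
  end.

Definition psrc (p : path) : V := fst p.
Definition prange (p : path) : V := last_v (fst p) (snd p).

(* concatenation of a path with a continuation w (a path starting at the
   range of p, given by its edge list; w = [] is the vertex r(p)) *)
Definition pcat (p : path) (w : list Ed) : path := (fst p, snd p ++ w).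

(* non-zero elements u v^{-1} of G(E) *)
Record GE : Type := mkGE {
  gu : path; gv : path;
  gu_path : is_path gu; gv_path : is_path gv;
  g_range : prange gu = prange gv }.

(* G(E) = non-zero elements plus the zero (None) *)
Definition GIS : Type := option GE.

Definition mul_rel (x y z : GE) : Prop :=
  (exists w, gu y = pcat (gv x) w /\ gu z = pcat (gu x) w /\ gv z = gv y) \/
  (exists w, gv x = pcat (gu y) w /\ gu z = gu x /\ gv z = pcat (gv y) w).

Definition gmul (a b : GIS) : GIS :=
  match a, b with
  | Some x, Some y =>
      match excluded_middle_informative (exists z, mul_rel x y z) with
      | left H => Some (proj1_sig (constructive_indefinite_description _ H))
      | right _ => None
      end
  | _, _ => None
  end.

(* topology tau_c: non-zero points isolated, neighbourhoods of 0 cofinite *)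
Definition tc_open (U : GIS -> Prop) : Prop :=
  U None -> finite_set (fun x => ~ U x).

Definition gmul_jointly_continuous : Prop :=
  forall (x y : GIS) (W : GIS -> Prop), tc_open W -> W (gmul x y) ->
    exists (U U' : GIS -> Prop), tc_open U /\ tc_open U' /\ U x /\ U' y /\
      forall a b, U a -> U' b -> W (gmul a b).

(* Green's relations on G(E) (using S^1) *)
Definition green_L (x y : GIS) : Prop :=
  (x = y \/ exists t, x = gmul t y) /\ (y = x \/ exists t, y = gmul t x).
Definition green_R (x y : GIS) : Prop :=
  (x = y \/ exists t, x = gmul y t) /\ (y = x \/ exists t, y = gmul x t).
Definition green_D (x y : GIS) : Prop :=
  exists z, green_L x z /\ green_R z y.

End GraphInverseSemigroup.

(* The bicyclic monoid, realised as nat*nat with (a,b) ~ q^a p^b :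
   q^a p^b . q^c p^d = q^(a+c-min(b,c)) p^(b+d-min(b,c)). *)
Definition bicyclic_mul (x y : nat * nat) : nat * nat :=
  (fst x + fst y - Nat.min (snd x) (fst y),
   snd x + snd y - Nat.min (snd x) (fst y)).

(* The semigroup M_omega of omega x omega matrix units; None is 0. *)
Definition Momega_mul (x y : option (nat * nat)) : option (nat * nat) :=
  match x, y with
  | Some (a, b), Some (c, d) => if Nat.eqb b c then Some (a, d) else None
  | _, _ => None
  end.

(* T contains a subsemigroup isomorphic to (S, mulS): an injective
   semigroup homomorphism S -> T (its image is such a subsemigroup). *)
Definition embeds {S T : Type} (mulS : S -> S -> S) (mulT : T -> T -> T) : Prop :=
  exists f : S -> T, (forall a b, f a = f b -> a = b) /\
    (forall a b, f (mulS a b) = mulT (f a) (f b)).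

(* Main.v *)
Require Import Defs.
From Stdlib Require Import List Arith Lia Classical ClassicalEpsilon ProofIrrelevance FinFun.
Import ListNotations.

Lemma fin_sub {A} (P Q : A -> Prop) : finite_set Q -> (forall x, P x -> Q x) -> finite_set P.
Proof. intros [l Hl] H. exists l. auto. Qed.

Lemma fin_or {A} (P Q : A -> Prop) : finite_set P -> finite_set Q -> finite_set (fun x => P x \/ Q x).
Proof. intros [l1 H1] [l2 H2]. exists (l1 ++ l2). intros x [Hx|Hx]; apply in_or_app; auto. Qed.

Lemma fin_union {I A} (L : list I) (P : I -> A -> Prop) :
  (forall i, In i L -> finite_set (P i)) -> finite_set (fun x => exists i, In i L /\ P i x).
Proof.
  induction L as [|i L IH]; intros H.
  - exists []. intros x [i [[] _]].
  - destruct (H i (or_introl eq_refl)) as [l1 H1].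
    destruct IH as [l2 H2]. { intros j Hj. apply H. right; auto. }
    exists (l1 ++ l2). intros x [j [[<-|Hj] Hx]]; apply in_or_app; [left|right]; eauto.
Qed.

Lemma fin_inj {A B} (P : A -> Prop) (f : A -> B) (l : list B) :
  (forall x, P x -> In (f x) l) -> (forall x y, P x -> P y -> f x = f y -> x = y) -> finite_set P.
Proof.
  revert P. induction l as [|b l IH]; intros P H Hi.
  - exists []. intros x Hx. destruct (H x Hx).
  - destruct (classic (exists x, P x /\ f x = b)) as [[x0 [Px0 Fx0]]|Hn].
    + destruct (IH (fun x => P x /\ f x <> b)) as [L HL].
      * intros x [Px Fx]. destruct (H x Px); [congruence|auto].
      * intros x y [] []. auto.
      * exists (x0 :: L). intros x Px. destruct (classic (f x = b)).
        -- left. apply Hi; congruence.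
        -- right. auto.
    + apply IH.
      * intros x Px. destruct (H x Px); auto. exfalso; eauto.
      * auto.
Qed.

Lemma fin_single {A} (P : A -> Prop) : (forall x y, P x -> P y -> x = y) -> finite_set P.
Proof. intros H. apply (fin_inj P (fun _ => tt) [tt]); auto. intros; destruct tt; left; auto. Qed.

Lemma fin_prefix {T} (l : list T) : finite_set (fun p => exists w, l = p ++ w).
Proof.
  induction l as [|a l [L HL]].
  - exists [[]]. intros p [w Hw]. destruct p; [left; auto| discriminate].
  - exists ([] :: map (cons a) L). intros p [w Hw]. destruct p as [|b p]; [left; auto|].
    right. simpl in Hw. injection Hw as -> Hw. apply in_map. apply HL. eauto.
Qed.

Lemma pigeon {T} (g : nat -> T) (l : list T) :
  (forall n, In (g n) l) -> (forall n m, g n = g m -> n = m) -> False.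
Proof.
  intros H Hi.
  assert (ND : NoDup (map g (seq 0 (S (length l))))).
  { apply FinFun.Injective_map_NoDup. exact Hi. apply seq_NoDup. }
  apply NoDup_incl_length with (l' := l) in ND.
  - rewrite length_map, length_seq in ND. lia.
  - intros x Hx. apply in_map_iff in Hx. destruct Hx as [n [<- _]]. auto.
Qed.

Lemma infinite_seq {T} (P : T -> Prop) : ~ finite_set P ->
  exists g : nat -> T, (forall n, P (g n)) /\ (forall n m, g n = g m -> n = m).
Proof.
  intros Hn.
  assert (Hh : forall l : list T, exists x, P x /\ ~ In x l).
  { intros l. apply NNPP. intros C. apply Hn. exists l. intros x Px.
    apply NNPP. intros Nx. apply C. eauto. }
  destruct (choice _ Hh) as [h Hh'].
  set (L := fix L n := match n with 0 => [] | S n => h (L n) :: L n end).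
  exists (fun n => h (L n)). split. { intros n. apply Hh'. }
  assert (Hin : forall m n, m < n -> In (h (L m)) (L n)).
  { intros m n; induction n; intros Hmn; [lia|]. simpl.
    destruct (Nat.eq_dec m n); [subst; left; auto| right; apply IHn; lia]. }
  intros n m E. destruct (Nat.lt_trichotomy n m) as [C|[C|C]]; auto; exfalso.
  - apply (proj2 (Hh' (L m))). rewrite <- E. auto.
  - apply (proj2 (Hh' (L n))). rewrite E. auto.
Qed.
Section G.
Context {V Ed : Type} (s r : Ed -> V).

Notation GE := (GE s r).
Notation gu := (gu s r).
Notation gv := (gv s r).
Notation mul_rel := (mul_rel s r).
Notation gmul := (gmul s r).

Lemma ge_eq (x y : GE) : gu x = gu y -> gv x = gv y -> x = y.
Proof.
  destruct x as [u1 v1 pu1 pv1 e1], y as [u2 v2 pu2 pv2 e2]; simpl; intros -> ->.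
  rewrite (proof_irrelevance _ pu1 pu2), (proof_irrelevance _ pv1 pv2), (proof_irrelevance _ e1 e2).
  reflexivity.
Qed.

Lemma pcat_nil (p : @path V Ed) : pcat p [] = p.
Proof. destruct p; unfold pcat; simpl; rewrite app_nil_r; auto. Qed.

Lemma pcat_inj (p : @path V Ed) w1 w2 : pcat p w1 = pcat p w2 -> w1 = w2.
Proof. unfold pcat; intros H; injection H; apply app_inv_head. Qed.

Lemma pcat_inj_l (p q : @path V Ed) w : fst p = fst q -> pcat p w = pcat q w -> p = q.
Proof.
  destruct p, q; unfold pcat; simpl; intros -> H; injection H; intros H'.
  apply app_inv_tail in H'. subst; auto.
Qed.

Lemma pcat_anti (p q : @path V Ed) w1 w2 : p = pcat q w1 -> q = pcat p w2 -> w1 = [] /\ w2 = [].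
Proof.
  destruct p as [a p], q as [b q]; unfold pcat; simpl; intros H1 H2; simpl in H1, H2.
  injection H1 as -> H1. injection H2 as H2. subst q.
  rewrite <- app_assoc in H1. rewrite <- (app_nil_r p) in H1 at 1.
  apply app_inv_head in H1. symmetry in H1. apply app_eq_nil in H1. tauto.
Qed.

Lemma pcat_prefix (p q : @path V Ed) w1 w2 : pcat p w1 = pcat q w2 ->
  exists w, (snd p = snd q ++ w) \/ (snd q = snd p ++ w).
Proof.
  destruct p as [a p], q as [b q]; unfold pcat; simpl; intros H; simpl in H; injection H as _ H.
  apply app_eq_app in H. destruct H as [l [[-> _]|[-> _]]]; eauto.
Qed.

Lemma mul_rel_fun x y z1 z2 : mul_rel x y z1 -> mul_rel x y z2 -> z1 = z2.
Proof.
  intros [[w1 [A1 [B1 C1]]]|[w1 [A1 [B1 C1]]]] [[w2 [A2 [B2 C2]]]|[w2 [A2 [B2 C2]]]];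
    apply ge_eq.
  - rewrite A1 in A2. apply pcat_inj in A2. congruence.
  - congruence.
  - destruct (pcat_anti _ _ _ _ A1 A2) as [-> ->]. rewrite B1, B2, pcat_nil; auto.
  - destruct (pcat_anti _ _ _ _ A1 A2) as [-> ->]. rewrite C1, C2, pcat_nil; auto.
  - destruct (pcat_anti _ _ _ _ A2 A1) as [-> ->]. rewrite B1, B2, pcat_nil; auto.
  - destruct (pcat_anti _ _ _ _ A2 A1) as [-> ->]. rewrite C1, C2, pcat_nil; auto.
  - congruence.
  - rewrite A1 in A2. apply pcat_inj in A2. congruence.
Qed.

Lemma gmul_eq x y z : mul_rel x y z -> gmul (Some x) (Some y) = Some z.
Proof.
  intros H. unfold gmul. destruct excluded_middle_informative as [H'|H'].
  - f_equal. destruct (constructive_indefinite_description _ H') as [z' Hz']; simpl.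
    eapply mul_rel_fun; eauto.
  - exfalso; eauto.
Qed.

Lemma gmul_none x y : ~ (exists z, mul_rel x y z) -> gmul (Some x) (Some y) = None.
Proof.
  intros H. unfold gmul. destruct excluded_middle_informative as [H'|H']; tauto.
Qed.

Lemma gmul_some a b z : gmul a b = Some z ->
  exists x y, a = Some x /\ b = Some y /\ mul_rel x y z.
Proof.
  destruct a as [x|], b as [y|]; simpl; try discriminate.
  destruct excluded_middle_informative as [H'|H']; try discriminate.
  intros E; injection E as <-. exists x, y. repeat split.
  destruct (constructive_indefinite_description _ H'); auto.
Qed.

Lemma gmul_None_r a : gmul a None = None.
Proof. destruct a; reflexivity. Qed.

Lemma mul_rel_gv x y z : mul_rel x y z -> exists w, gv z = pcat (gv y) w.
Proof. intros [[w [? [? ?]]]|[w [? [? ?]]]]; eauto. exists []; rewrite pcat_nil; auto. Qed.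

Lemma mul_rel_gu x y z : mul_rel x y z -> exists w, gu z = pcat (gu x) w.
Proof. intros [[w [? [? ?]]]|[w [? [? ?]]]]; eauto. exists []; rewrite pcat_nil; auto. Qed.


Lemma fin_inj' {A B} (P : A -> Prop) (Q : B -> Prop) (f : A -> B) :
  finite_set Q -> (forall x, P x -> Q (f x)) -> (forall x y, P x -> P y -> f x = f y -> x = y) -> finite_set P.
Proof. intros [l Hl] H1 H2. apply (fin_inj P f l); auto. Qed.

Lemma path_eq (p q : @path V Ed) : fst p = fst q -> snd p = snd q -> p = q.
Proof. destruct p, q; simpl; congruence. Qed.

Lemma fiber1 x z : finite_set (fun y => mul_rel x y z).
Proof.
  unfold mul_rel; apply fin_or.
  - apply fin_single. intros y1 y2 [w1 [A1 [B1 C1]]] [w2 [A2 [B2 C2]]].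
    rewrite B1 in B2. apply pcat_inj in B2. subst. apply ge_eq; congruence.
  - apply (fin_inj' _ _ (fun y => snd (gu y)) (fin_prefix (snd (gv x)))).
    + intros y [w [A _]]. exists w. rewrite A. reflexivity.
    + intros y1 y2 [w1 [A1 [B1 C1]]] [w2 [A2 [B2 C2]]] E.
      assert (Eu : gu y1 = gu y2).
      { apply path_eq; auto. assert (F1 := f_equal fst A1). assert (F2 := f_equal fst A2).
        simpl in F1, F2. congruence. }
      rewrite Eu in A1. rewrite A1 in A2. apply pcat_inj in A2. subst.
      apply ge_eq; auto. rewrite C1 in C2. apply pcat_inj_l in C2; auto.
      assert (F1 := f_equal fst C1). rewrite C2 in C1. 
      assert (F2 := f_equal fst C1). simpl in F1, F2. congruence.
Qed.

Lemma fiber2 y z : finite_set (fun x => mul_rel x y z).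
Proof.
  unfold mul_rel; apply fin_or.
  - apply (fin_inj' _ _ (fun x => snd (gv x)) (fin_prefix (snd (gu y)))).
    + intros x [w [A _]]. exists w. rewrite A. reflexivity.
    + intros x1 x2 [w1 [A1 [B1 C1]]] [w2 [A2 [B2 C2]]] E.
      assert (Ev : gv x1 = gv x2).
      { apply path_eq; auto. assert (F1 := f_equal fst A1). assert (F2 := f_equal fst A2).
        simpl in F1, F2. congruence. }
      rewrite Ev in A1. rewrite A1 in A2. apply pcat_inj in A2. subst.
      apply ge_eq; auto. rewrite B1 in B2. apply pcat_inj_l in B2; auto.
      assert (F1 := f_equal fst B1). rewrite B2 in B1.
      assert (F2 := f_equal fst B1). simpl in F1, F2. congruence.
  - apply fin_single. intros x1 x2 [w1 [A1 [B1 C1]]] [w2 [A2 [B2 C2]]].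
    rewrite C1 in C2. apply pcat_inj in C2. subst. apply ge_eq; congruence.
Qed.

Definition Qset (c3 : forall e : V, finite_set (fun u : path => is_path s r u /\ prange r u = e))
  (p0 : @path V Ed) : (list Ed * path) -> Prop :=
  fun q => (exists w, snd p0 = fst q ++ w) /\ is_path s r (snd q) /\ prange r (snd q) = last_v r (fst p0) (fst q).

Lemma Qset_fin c3 p0 : finite_set (Qset c3 p0).
Proof.
  destruct (fin_prefix (snd p0)) as [L HL].
  eapply fin_sub.
  - apply (fin_union L (fun pre q => fst q = pre /\ is_path s r (snd q) /\ prange r (snd q) = last_v r (fst p0) pre)).
    intros pre _. destruct (c3 (last_v r (fst p0) pre)) as [l Hl].
    exists (map (pair pre) l). intros [a b] [E [P1 P2]]. simpl in *. subst.
    apply in_map. auto.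
  - intros q [H1 [H2 H3]]. exists (fst q). auto.
Qed.

Lemma c3_c2_GE (c3 : forall e : V, finite_set (fun u : path => is_path s r u /\ prange r u = e)) z :
  finite_set (fun p : GE * GE => mul_rel (fst p) (snd p) z).
Proof.
  unfold mul_rel; apply fin_or.
  - apply (fin_inj' _ _ (fun p => (snd (gu (fst p)), gv (fst p))) (Qset_fin c3 (gu z))).
    + intros [x y] [w [A [B C]]]; simpl in *. split; [|split].
      * exists w. rewrite B. reflexivity.
      * apply gv_path.
      * pose proof (g_range _ _ x) as G. unfold prange in *. cbn [fst snd]; rewrite <- G.
        assert (F := f_equal fst B). simpl in F. rewrite F. reflexivity.
    + intros [x1 y1] [x2 y2] [w1 [A1 [B1 C1]]] [w2 [A2 [B2 C2]]] E; simpl in *.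
      injection E as E1 E2.
      assert (Eu : gu x1 = gu x2).
      { apply path_eq; auto. assert (F1 := f_equal fst B1). assert (F2 := f_equal fst B2).
        simpl in F1, F2. congruence. }
      rewrite Eu in B1. rewrite B1 in B2. apply pcat_inj in B2. subst.
      f_equal; apply ge_eq; congruence.
  - apply (fin_inj' _ _ (fun p => (snd (gv (snd p)), gu (snd p))) (Qset_fin c3 (gv z))).
    + intros [x y] [w [A [B C]]]; simpl in *. split; [|split].
      * exists w. rewrite C. reflexivity.
      * apply gu_path.
      * pose proof (g_range _ _ y) as G. unfold prange in *. cbn [fst snd]. rewrite G.
        assert (F := f_equal fst C). simpl in F. rewrite F. reflexivity.
    + intros [x1 y1] [x2 y2] [w1 [A1 [B1 C1]]] [w2 [A2 [B2 C2]]] E; simpl in *.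
      injection E as E1 E2.
      assert (Ev : gv y1 = gv y2).
      { apply path_eq; auto. assert (F1 := f_equal fst C1). assert (F2 := f_equal fst C2).
        simpl in F1, F2. congruence. }
      rewrite Ev in C1. rewrite C1 in C2. apply pcat_inj in C2. subst.
      f_equal; apply ge_eq; congruence.
Qed.

Lemma L_some x b : green_L s r (Some x) b -> exists y, b = Some y /\ gv y = gv x.
Proof.
  intros [H1 H2]. destruct H2 as [->|[t Ht]]; [eauto|].
  destruct b as [b|]. 2:{ exfalso. destruct H1 as [E|[t2 E]]; [discriminate|]. rewrite gmul_None_r in E; discriminate. }
  symmetry in Ht. destruct (gmul_some _ _ _ Ht) as [t' [x' [-> [E M]]]]. injection E as <-.
  exists b. split; auto.
  destruct H1 as [E|[t Ht2]]; [congruence|].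
  symmetry in Ht2. destruct (gmul_some _ _ _ Ht2) as [t2 [y' [-> [E M2]]]]. injection E as <-.
  destruct (mul_rel_gv _ _ _ M) as [w1 W1]. destruct (mul_rel_gv _ _ _ M2) as [w2 W2].
  destruct (pcat_anti _ _ _ _ W1 W2) as [-> ->]. rewrite W1, pcat_nil. auto.
Qed.

Lemma R_some x b : green_R s r (Some x) b -> exists y, b = Some y /\ gu y = gu x.
Proof.
  intros [H1 H2]. destruct H2 as [->|[t Ht]]; [eauto|].
  destruct b as [b|]. 2:{ exfalso. destruct H1 as [E|[t2 E]]; [discriminate|]. discriminate. }
  symmetry in Ht. destruct (gmul_some _ _ _ Ht) as [x' [t' [E [-> M]]]]. injection E as <-.
  exists b. split; auto.
  destruct H1 as [E|[t Ht2]]; [congruence|].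
  symmetry in Ht2. destruct (gmul_some _ _ _ Ht2) as [y' [t2 [E [-> M2]]]]. injection E as <-.
  destruct (mul_rel_gu _ _ _ M) as [w1 W1]. destruct (mul_rel_gu _ _ _ M2) as [w2 W2].
  destruct (pcat_anti _ _ _ _ W1 W2) as [-> ->]. rewrite W1, pcat_nil. auto.
Qed.

Lemma c3_c5 (c3 : forall e : V, finite_set (fun u : path => is_path s r u /\ prange r u = e)) x :
  finite_set (green_D s r x).
Proof.
  destruct x as [x|].
  - destruct (c3 (prange r (gv x))) as [l Hl].
    assert (F : finite_set (fun y : GE => (is_path s r (gu y) /\ prange r (gu y) = prange r (gv x)) /\
                                   (is_path s r (gv y) /\ prange r (gv y) = prange r (gv x)))).
    { apply (fin_inj _ (fun y => (gu y, gv y)) (list_prod l l)).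
      - intros y [A B]. apply in_prod; auto.
      - intros y1 y2 _ _ E. injection E as E1 E2. apply ge_eq; auto. }
    destruct F as [L HL]. exists (map Some L).
    intros b [z [HLz HRz]]. destruct (L_some _ _ HLz) as [y [-> Ey]].
    destruct (R_some _ _ HRz) as [y' [-> Ey']]. apply in_map. apply HL.
    pose proof (g_range _ _ y) as G1. pose proof (g_range _ _ y') as G2.
    split; split; try apply gu_path; try apply gv_path; congruence.
  - exists [None]. intros b [z [[_ H1] [_ H2]]].
    assert (z = None) by (destruct H1 as [->|[t ->]]; auto; apply gmul_None_r). subst.
    destruct H2 as [->|[t ->]]; left; auto.
Qed.

Lemma c2_c3 (c2 : forall z : GE, finite_set (fun p : GIS s r * GIS s r => gmul (fst p) (snd p) = Some z)) e :
  finite_set (fun u : path => is_path s r u /\ prange r u = e).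
Proof.
  assert (Pe : is_path s r (e, [])) by exact I.
  assert (Re : prange r (e, []) = e) by reflexivity.
  set (z := mkGE s r (e, []) (e, []) Pe Pe eq_refl).
  destruct (c2 z) as [l Hl].
  exists (map (fun p => match fst p with Some g => gv g | None => (e, []) end) l).
  intros u [Pu Ru].
  set (a := mkGE s r (e, []) u Pe Pu (eq_trans Re (eq_sym Ru))).
  set (b := mkGE s r u (e, []) Pu Pe (eq_trans Ru (eq_sym Re))).
  assert (M : mul_rel a b z).
  { left. exists []. simpl. rewrite !pcat_nil. auto. }
  apply (in_map (fun p => match fst p with Some g => gv g | None => (e, []) end) _ (Some a, Some b)).
  apply Hl. simpl. apply gmul_eq. auto.
Qed.

Lemma c3_c2 (c3 : forall e : V, finite_set (fun u : path => is_path s r u /\ prange r u = e)) z :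
  finite_set (fun p : GIS s r * GIS s r => gmul (fst p) (snd p) = Some z).
Proof.
  destruct (c3_c2_GE c3 z) as [L HL].
  exists (map (fun q => (Some (fst q), Some (snd q))) L).
  intros [a b] H. simpl in H. destruct (gmul_some _ _ _ H) as [x [y [-> [-> M]]]].
  apply (in_map (fun q => (Some (fst q), Some (snd q))) L (x, y)). apply HL. exact M.
Qed.

Lemma c1_c2 (c1 : gmul_jointly_continuous s r) z :
  finite_set (fun p : GIS s r * GIS s r => gmul (fst p) (snd p) = Some z).
Proof.
  destruct (c1 None None (fun g => g <> Some z)) as [U [U' [oU [oU' [UN [UN' HW]]]]]].
  - intros _. exists [Some z]. intros g Hg. left. apply NNPP in Hg. auto.
  - simpl. discriminate.
  - destruct (oU UN) as [LU HU]. destruct (oU' UN') as [LU' HU'].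
    eapply fin_sub.
    + apply fin_or.
      * apply (fin_union LU (fun a p => fst p = a /\ gmul (fst p) (snd p) = Some z)).
        intros [x|] _.
        -- destruct (fiber1 x z) as [ly Hy]. exists (map (fun y => (Some x, Some y)) ly).
           intros [a b] [E H]; simpl in *; subst.
           destruct (gmul_some _ _ _ H) as [x' [y [E [-> M]]]]. injection E as <-.
           apply (in_map (fun y => (Some x, Some y))). auto.
        -- exists []. intros [a b] [E H]; simpl in *; subst. discriminate.
      * apply (fin_union LU' (fun b p => snd p = b /\ gmul (fst p) (snd p) = Some z)).
        intros [y|] _.
        -- destruct (fiber2 y z) as [lx Hx]. exists (map (fun x => (Some x, Some y)) lx).
           intros [a b] [E H]; simpl in *; subst.
           destruct (gmul_some _ _ _ H) as [x [y' [-> [E M]]]]. injection E as <-.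
           apply (in_map (fun x => (Some x, Some y))). auto.
        -- exists []. intros [a b] [E H]; simpl in *; subst. rewrite gmul_None_r in H. discriminate.
    + intros [a b] H. simpl in H.
      destruct (classic (U a)) as [Ua|Ua].
      * destruct (classic (U' b)) as [Ub|Ub].
        -- exfalso. exact (HW a b Ua Ub H).
        -- right. exists b. split; auto.
      * left. exists a. split; auto.
Qed.

Lemma c2_c1 (c2 : forall z : GE, finite_set (fun p : GIS s r * GIS s r => gmul (fst p) (snd p) = Some z)) :
  gmul_jointly_continuous s r.
Proof.
  intros x y W oW HW. destruct (classic (W None)) as [WN|WN].
  - destruct (oW WN) as [LW HLW].
    assert (FB : finite_set (fun p : GIS s r * GIS s r => ~ W (gmul (fst p) (snd p)))).
    { eapply fin_sub.
      - apply (fin_union LW (fun g p => match g with Some z => gmul (fst p) (snd p) = Some z | None => False end)).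
        intros [z|] _; [apply c2|]. exists []. intros _ [].
      - intros p Hp. exists (gmul (fst p) (snd p)). split; auto.
        destruct (gmul (fst p) (snd p)); auto. }
    destruct FB as [LB HB].
    exists (fun a => a = x \/ forall b, W (gmul a b)), (fun b => b = y \/ forall a, W (gmul a b)).
    split; [|split; [|split; [|split]]].
    + intros _. exists (map fst LB). intros a Ha.
      assert (Hb : exists b, ~ W (gmul a b)).
      { apply NNPP. intros C. apply Ha. right. intros b. apply NNPP. eauto. }
      destruct Hb as [b Hb]. apply (in_map fst LB (a, b)). apply HB. auto.
    + intros _. exists (map snd LB). intros b Hb.
      assert (Ha : exists a, ~ W (gmul a b)).
      { apply NNPP. intros C. apply Hb. right. intros a. apply NNPP. eauto. }
      destruct Ha as [a Ha]. apply (in_map snd LB (a, b)). apply HB. auto.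
    + left; auto.
    + left; auto.
    + intros a b [->|Ha] [->|Hb]; auto.
  - exists (fun a => a = x), (fun b => b = y).
    split; [|split; [|split; [|split]]]; auto.
    + intros E. subst. simpl in HW. contradiction.
    + intros E. subst. rewrite gmul_None_r in HW. contradiction.
    + intros a b -> ->. auto.
Qed.

Lemma chain_app v l1 l2 : chain s r v (l1 ++ l2) <-> chain s r v l1 /\ chain s r (last_v r v l1) l2.
Proof.
  revert v; induction l1 as [|e l1 IH]; intros v; simpl; [tauto|].
  rewrite IH. tauto.
Qed.

Lemma last_v_app v l1 l2 : last_v r v (l1 ++ l2) = last_v r (last_v r v l1) l2.
Proof. revert v; induction l1; simpl; auto. Qed.

Fixpoint cpow (c : list Ed) (n : nat) : list Ed :=
  match n with 0 => [] | S n => c ++ cpow c n end.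

Lemma cpow_add c n m : cpow c (n + m) = cpow c n ++ cpow c m.
Proof. induction n; simpl; auto. rewrite IHn, app_assoc; auto. Qed.

Lemma cpow_len c n : length (cpow c n) = n * length c.
Proof. induction n; simpl; auto. rewrite length_app, IHn. lia. Qed.

Lemma cpow_path v c : chain s r v c -> last_v r v c = v ->
  forall n, chain s r v (cpow c n) /\ last_v r v (cpow c n) = v.
Proof.
  intros Hc Hl n; induction n as [|n [IH1 IH2]]; simpl; [split; auto|].
  rewrite chain_app, last_v_app, Hl. auto.
Qed.

Lemma cycle_bicyclic v c : chain s r v c -> last_v r v c = v -> c <> [] ->
  embeds bicyclic_mul gmul.
Proof.
  intros Hc Hl Hne.
  pose proof (cpow_path v c Hc Hl) as CP.
  exists (fun p => Some (mkGE s r (v, cpow c (fst p)) (v, cpow c (snd p))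
                 (proj1 (CP (fst p))) (proj1 (CP (snd p)))
                 (eq_trans (proj2 (CP (fst p))) (eq_sym (proj2 (CP (snd p))))))).
  assert (Lc : length c <> 0) by (destruct c; simpl; congruence).
  assert (Ci : forall n m, cpow c n = cpow c m -> n = m).
  { intros n m E. apply (f_equal (@length Ed)) in E. rewrite !cpow_len in E. apply (Nat.mul_cancel_r _ _ _ Lc); auto. }
  split.
  - intros [a b] [a' b'] E. injection E as E1 E2. simpl in *. f_equal; auto.
  - intros [a b] [c' d]. symmetry. apply gmul_eq. unfold mul_rel, bicyclic_mul; simpl.
    destruct (le_lt_dec b c') as [H|H].
    + left. exists (cpow c (c' - b)). unfold pcat; simpl. rewrite <- !cpow_add.
      split; [|split]; do 2 f_equal; lia.
    + right. exists (cpow c (b - c')). unfold pcat; simpl. rewrite <- !cpow_add.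
      split; [|split]; do 2 f_equal; lia.
Qed.

Definition NC := forall v c, chain s r v c -> last_v r v c = v -> c = [].

Lemma nc_prefix (nc : NC) (p q : @path V Ed) w : is_path s r q -> q = pcat p w ->
  prange r p = prange r q -> w = [].
Proof.
  intros Pq E R. subst q. unfold is_path, pcat, prange in *; simpl in *.
  apply chain_app in Pq. destruct Pq as [_ Pq]. rewrite last_v_app in R.
  apply (nc _ _ Pq). auto.
Qed.

Lemma infinite_Momega (nc : NC) e : ~ finite_set (fun u : path => is_path s r u /\ prange r u = e) ->
  embeds Momega_mul gmul.
Proof.
  intros Hn. destruct (infinite_seq _ Hn) as [g [Hg Hgi]].
  exists (fun o => match o with None => None | Some p =>
     Some (mkGE s r (g (fst p)) (g (snd p)) (proj1 (Hg _)) (proj1 (Hg _))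
            (eq_trans (proj2 (Hg (fst p))) (eq_sym (proj2 (Hg (snd p))))))
     end).
  split.
  - intros [[i j]|] [[k l]|] E; try discriminate; auto.
    injection E as E1 E2. simpl in *. apply Hgi in E1. apply Hgi in E2. subst. auto.
  - intros [[i j]|] [[k l]|]; simpl; try reflexivity; try (symmetry; apply gmul_None_r).
    destruct (Nat.eqb_spec j k) as [->|Hjk].
    + symmetry. apply gmul_eq. left. exists []. simpl. rewrite !pcat_nil. auto.
    + symmetry. apply gmul_none. intros [z [[w [A _]]|[w [A _]]]]; simpl in A.
      * assert (w = []) by (eapply nc_prefix; eauto; [apply Hg| rewrite (proj2 (Hg j)), (proj2 (Hg k)); auto]).
        subst. rewrite pcat_nil in A. apply Hgi in A. auto.
      * assert (w = []) by (eapply nc_prefix; eauto; [apply Hg| rewrite (proj2 (Hg j)), (proj2 (Hg k)); auto]).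
        subst. rewrite pcat_nil in A. apply Hgi in A. auto.
Qed.

Lemma c4_c3 (c4 : ~ embeds bicyclic_mul gmul /\ ~ embeds Momega_mul gmul) e :
  finite_set (fun u : path => is_path s r u /\ prange r u = e).
Proof.
  apply NNPP. intros Hn. destruct c4 as [NB NM].
  destruct (classic (exists v c, chain s r v c /\ last_v r v c = v /\ c <> [])) as [[v [c [H1 [H2 H3]]]]|Hc].
  - apply NB. eapply cycle_bicyclic; eauto.
  - apply NM. apply (infinite_Momega) with e; auto.
    intros v c H1 H2. apply NNPP. intros H3. apply Hc. eauto.
Qed.

Lemma c5_c4 (c5 : forall x : GIS s r, finite_set (green_D s r x)) :
  ~ embeds bicyclic_mul gmul /\ ~ embeds Momega_mul gmul.
Proof.
  split; intros [f [Hi Hh]].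
  - destruct (c5 (f (0, 0))) as [l Hl].
    apply (pigeon (fun n => f (n, 0)) l).
    + intros n. apply Hl. exists (f (n, 0)). split; [split|split; left; auto].
      * right. exists (f (0, n)). rewrite <- Hh. f_equal. unfold bicyclic_mul; simpl. f_equal; lia.
      * right. exists (f (n, 0)). rewrite <- Hh. f_equal. unfold bicyclic_mul; simpl. f_equal; lia.
    + intros n m E. apply Hi in E. congruence.
  - destruct (c5 (f (Some (0, 0)))) as [l Hl].
    apply (pigeon (fun n => f (Some (n, 0))) l).
    + intros n. apply Hl. exists (f (Some (n, 0))). split; [split|split; left; auto].
      * right. exists (f (Some (0, n))). rewrite <- Hh. simpl. rewrite Nat.eqb_refl. auto.
      * right. exists (f (Some (n, 0))). rewrite <- Hh. simpl. auto.
    + intros n m E. apply Hi in E. congruence.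
Qed.
End G.

Theorem theorem2p4 (V Ed : Type) (s r : Ed -> V) :
  let G := GIS s r in
  let mul := gmul s r in
  let c1 := gmul_jointly_continuous s r in
  let c2 := forall z : GE s r,
      finite_set (fun p : G * G => mul (fst p) (snd p) = Some z) in
  let c3 := forall e : V,
      finite_set (fun u : path => is_path s r u /\ prange r u = e) in
  let c4 := ~ embeds bicyclic_mul mul /\ ~ embeds Momega_mul mul in
  let c5 := forall x : G, finite_set (green_D s r x) in
  (c1 <-> c2) /\ (c2 <-> c3) /\ (c3 <-> c4) /\ (c4 <-> c5).
Proof.
  cbv zeta.
  split; [|split; [|split]]; split; intros H.
  - intros z. apply c1_c2. exact H.
  - apply c2_c1. exact H.
  - intros e. apply c2_c3. exact H.
  - intros z. apply c3_c2. exact H.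
  - apply c5_c4. intros x. apply c3_c5. exact H.
  - intros e. apply c4_c3. exact H.
  - intros x. apply c3_c5. intros e. apply c4_c3. exact H.
  - apply c5_c4. exact H.
Qed.
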